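(* Let $M$ and $H$ be $3$-connected simple matroids on the same ground set, each of rank at least $4$, and suppose that a sequence $x_1,\dots,x_n,y_1,\dots,y_n$ is a carambole of both $M$ and $H$, with filament $L=\{y_1,\dots,y_n\}$. If $M/L=H/L$, then $M=H$.
   Context: A line of a matroid $M$ is a rank-$2$ set. For $n\ge3$, a sequence $x_1,\dots,x_n,y_1,\dots,y_n$ of elements of $M$ is a carambole of $M$ if $L:=\{y_1,\dots,y_n\}$ is a line of $M$ with $n$ distinct elements such that $\mathrm{si}(M/L)$ (the simplification) is $3$-connected, and, for each $i$, $(L-y_i)\cup x_i$ is a cocircuit of $M$; $L$ is the filament of the carambole. *)

(* Defs.v *)
From mathcomp Require Import all_boot.
Set Implicit Arguments. Unset Strict Implicit. Unset Printing Implicit Defensive.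

(* A matroid on a finite type T: a ground set together with a rank function.
   The rank function is only meaningful on subsets of the ground set. *)
Record matroid (T : finType) := Matroid { ground : {set T}; rk : {set T} -> nat }.

Section Matroids.
Variable T : finType.
Implicit Types (M : matroid T) (X Y S L C : {set T}).

Definition is_matroid M : Prop :=
  [/\ (forall X, X \subset ground M -> rk M X <= #|X|),
      (forall X Y, X \subset Y -> Y \subset ground M -> rk M X <= rk M Y) &
      (forall X Y, X \subset ground M -> Y \subset ground M ->
         rk M (X :|: Y) + rk M (X :&: Y) <= rk M X + rk M Y)].

Definition matroid_eq M (H : matroid T) : Prop :=
  ground M = ground H /\ forall X, X \subset ground M -> rk M X = rk H X.

Definition mrank M : nat := rk M (ground M).

Definition contract M L : matroid T :=
  Matroid (ground M :\: L) (fun X => rk M (X :|: L) - rk M L).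
Definition restrict M S : matroid T := Matroid S (rk M).

Definition loop M (e : T) : bool := (e \in ground M) && (rk M [set e] == 0).
Definition parallel M (e f : T) : bool :=
  [&& e \in ground M, f \in ground M, e != f, rk M [set e] == 1,
      rk M [set f] == 1 & rk M [set e; f] == 1].

Definition simple M : Prop :=
  (forall e, e \in ground M -> rk M [set e] = 1) /\
  (forall e f, e \in ground M -> f \in ground M -> e != f -> rk M [set e; f] = 2).

(* simplification: delete loops and, in each parallel class, keep only the
   element that comes first in the enumeration order of T *)
Definition si_set M : {set T} :=
  [set e in ground M | ~~ loop M e &&
     [forall f, parallel M f e ==> (enum_rank e < enum_rank f)%N]].
Definition si M : matroid T := restrict M (si_set M).

Definition k_separation M (k : nat) X : Prop :=
  [/\ X \subset ground M, k <= #|X|, k <= #|ground M :\: X| &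
      rk M X + rk M (ground M :\: X) < mrank M + k].

Definition n_connected M (n : nat) : Prop :=
  forall k, 1 <= k < n -> forall X, ~ k_separation M k X.

Definition cocircuit M C : Prop :=
  [/\ C \subset ground M, rk M (ground M :\: C) < mrank M &
      forall D : {set T}, D \proper C -> ~ (rk M (ground M :\: D) < mrank M)].

Definition line M L : Prop := L \subset ground M /\ rk M L = 2.

Definition filament (n : nat) (y : 'I_n -> T) : {set T} := [set y i | i : 'I_n].

Definition carambole M (n : nat) (x y : 'I_n -> T) : Prop :=
  [/\ 3 <= n,
      (forall i, x i \in ground M) /\ injective y,
      line M (filament y),
      n_connected (si (contract M (filament y))) 3 &
      forall i, cocircuit M ((filament y :\ y i) :|: [set x i])].

End Matroids.

(* Main.v *)
Require Import Defs.
From mathcomp Require Import all_boot.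
From mathcomp Require Import zify.
Set Implicit Arguments. Unset Strict Implicit. Unset Printing Implicit Defensive.

Lemma rk_mono (T : finType) (M : matroid T) (X Y : {set T}) : is_matroid M ->
  X \subset Y -> Y \subset ground M -> rk M X <= rk M Y.
Proof. by case=> _ h _; apply: h. Qed.

Lemma rk_sub (T : finType) (M : matroid T) (X Y : {set T}) : is_matroid M ->
  X \subset ground M -> Y \subset ground M ->
  rk M (X :|: Y) + rk M (X :&: Y) <= rk M X + rk M Y.
Proof. by case=> _ _ h; apply: h. Qed.

Lemma rk_card (T : finType) (M : matroid T) (X : {set T}) : is_matroid M ->
  X \subset ground M -> rk M X <= #|X|.
Proof. by case=> h _ _; apply: h. Qed.

Lemma rk_U1 (T : finType) (M : matroid T) (X : {set T}) e : is_matroid M ->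
  X \subset ground M -> e \in ground M -> rk M (e |: X) <= rk M X + 1.
Proof.
move=> hM sX eE.
have se : [set e] \subset ground M by rewrite sub1set.
have := rk_sub hM sX se; have := rk_card hM se; rewrite cards1 setUC => h1 h2.
lia.
Qed.

Lemma cocirc_step (T : finType) (M : matroid T) (C X : {set T}) e : is_matroid M ->
  cocircuit M C -> X \subset ground M :\: C -> e \in C ->
  rk M (e |: X) = rk M X + 1.
Proof.
move=> hM [sCE hlt hmin] sXF eC.
have eE : e \in ground M by apply: (subsetP sCE).
have hD : C :\ e \proper C by rewrite properD1.
have hge := hmin _ hD.
have eq1 : ground M :\: (C :\ e) = e |: (ground M :\: C).
  apply/setP=> z; rewrite !inE; case: eqP => [->|_] /=; by rewrite ?eE ?eC.
have sFE : ground M :\: C \subset ground M by apply: subsetDl.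
have sXE : X \subset ground M by apply: subset_trans sXF sFE.
have sB : e |: X \subset ground M by rewrite subUset sub1set eE sXE.
have hU : (ground M :\: C) :|: (e |: X) = e |: (ground M :\: C).
  apply/setP=> z; rewrite !inE; case: eqP => [->|_] /=; first by rewrite orbT.
  case hz: (z \in X); last by rewrite orbF.
  by have := subsetP sXF z hz; rewrite !inE => ->.
have hI : (ground M :\: C) :&: (e |: X) = X.
  apply/setP=> z; rewrite !inE; case: eqP => [->|_] /=.
    rewrite eC /=; apply/esym/negbTE; apply/negP=> hx.
    by have := subsetP sXF e hx; rewrite inE eC.
  case hz: (z \in X); last by rewrite andbF.
  by have := subsetP sXF z hz; rewrite !inE => ->.
have := rk_sub hM sFE sB; rewrite hU hI -eq1.
move/negP: hge; rewrite /mrank -leqNgt => hge.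
have := rk_U1 hM sXE eE; move: hlt; rewrite /mrank; lia.
Qed.

Lemma line_cl (T : finType) (M : matroid T) (Z L : {set T}) a b : is_matroid M ->
  Z \subset ground M -> L \subset ground M -> rk M L = 2 ->
  a \in Z -> b \in Z -> a \in L -> b \in L -> rk M [set a; b] = 2 ->
  rk M (Z :|: L) = rk M Z.
Proof.
move=> hM sZ sL hL aZ bZ aL bL hab.
have sZL : Z :&: L \subset ground M by apply: subset_trans (subsetIl _ _) sZ.
have h1 : rk M [set a; b] <= rk M (Z :&: L).
  apply: rk_mono hM _ sZL.
  by apply/subsetP=> z; rewrite !inE => /orP [] /eqP ->; rewrite ?aZ ?aL ?bZ ?bL.
have h2 := rk_sub hM sZ sL.
have h3 : rk M Z <= rk M (Z :|: L).
  by apply: rk_mono hM (subsetUl _ _) _; rewrite subUset sZ sL.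
lia.
Qed.

Theorem proposition4p4 (T : finType) (M H : matroid T) (n : nat)
    (x y : 'I_n -> T) :
  is_matroid M -> is_matroid H ->
  ground M = ground H ->
  simple M -> simple H ->
  n_connected M 3 -> n_connected H 3 ->
  4 <= mrank M -> 4 <= mrank H ->
  carambole M x y -> carambole H x y ->
  matroid_eq (contract M (filament y)) (contract H (filament y)) ->
  matroid_eq M H.
Proof.
move=> hM hH hEq [_ sM] [_ sH] cM _ r4 _ [h3 [hxE hinj] [hLE hL2] _ hcM]
  [_ _ [_ hL2H] _ hcH] [_ hc].
set E := ground M in hEq hLE hxE hcM hc sM cM r4 *.
set L := filament y in hLE hL2 hcM hL2H hcH hc *.
have yL : forall i, y i \in L by move=> i; apply: imset_f.
have yE : forall i, y i \in E by move=> i; apply: (subsetP hLE).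
have inL : forall z, z \in L -> exists i, z = y i.
  by move=> z /imsetP [i _ ->]; exists i.
have r2M : forall i j, i != j -> rk M [set y i; y j] = 2.
  by move=> i j hij; apply: sM; rewrite ?yE // (inj_eq hinj).
have r2H : forall i j, i != j -> rk H [set y i; y j] = 2.
  by move=> i j hij; apply: sH; rewrite -?hEq ?yE // (inj_eq hinj).
have hLEH : L \subset ground H by rewrite -hEq.
have supL : forall Z : {set T}, Z \subset E -> rk M (Z :|: L) = rk H (Z :|: L).
  move=> Z sZ.
  have sX : Z :\: L \subset ground (contract M L).
    by rewrite /= setSD.
  have := hc _ sX; rewrite /=.
  have -> : Z :\: L :|: L = Z :|: L.
    by apply/setP=> z; rewrite !inE; case: (z \in L); rewrite ?orbT ?orbF.
  have sZL : Z :|: L \subset E by rewrite subUset sZ hLE.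
  have a1 := rk_mono hM (subsetUr Z L) sZL.
  have a2 : rk H L <= rk H (Z :|: L) by apply: rk_mono hH (subsetUr Z L) _; rewrite -hEq.
  lia.
have base : forall (Z : {set T}) (i j : 'I_n), Z \subset E -> y i \in Z -> y j \in Z -> i != j ->
    rk M Z = rk H Z.
  move=> Z i j sZ hi hj hij.
  rewrite -(line_cl hM sZ hLE hL2 hi hj (yL i) (yL j) (r2M _ _ hij)).
  have sZH : Z \subset ground H by rewrite -hEq.
  rewrite -(line_cl hH sZH hLEH hL2H hi hj (yL i) (yL j) (r2H _ _ hij)).
  exact: supL.
have other : forall i : 'I_n, exists j, j != i.
  move=> i; have : 0 < #|[set~ i]| by rewrite cardsC1 card_ord; lia.
  by case/card_gt0P => j; rewrite !inE => hj; exists j.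
pose C i := (L :\ y i) :|: [set x i].
have xnL : forall i, x i != y i.
  move=> i; apply/negP=> /eqP hxy.
  have hCL : C i = L.
    apply/setP=> z; rewrite /C hxy !inE; case: eqP => [->|_] /=; rewrite ?yL ?orbF ?orbT //.
  have [_ hlt _] : cocircuit M (C i) := hcM i; rewrite hCL in hlt.
  have sEL : E :\: L \subset E by apply: subsetDl.
  apply: (cM 2 _ L); first by [].
  have hU : L :|: (E :\: L) = E.
    apply/setP=> z; rewrite !inE; case hz: (z \in L) => //=.
    by rewrite (subsetP hLE z hz).
  have hI : L :&: (E :\: L) = set0.
    by apply/setP=> z; rewrite !inE; case: (z \in L); rewrite ?andbF.
  have := rk_sub hM hLE sEL; rewrite hU hI.
  have := rk_card hM sEL.
  have cL : #|L| = n by rewrite /L /filament card_imset // card_ord.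
  move: r4 hlt; rewrite /mrank /k_separation hL2 cL => r4 hlt h1 h2.
  rewrite -/E in r4 hlt; split; rewrite ?/mrank -?/E; lia.
have yC : forall i j, j != i -> y j \in C i.
  by move=> i j hij; rewrite /C !inE (inj_eq hinj) hij yL.
have xC : forall i, x i \in C i by move=> i; rewrite /C !inE eqxx orbT.
have inF : forall (X : {set T}) (i : 'I_n), X \subset E -> (forall z, z \in X -> z \in L -> z = y i) ->
    x i \notin X -> X \subset E :\: C i.
  move=> X i sX hz hx; apply/subsetP=> z zX; rewrite /C !inE (subsetP sX z zX) andbT.
  apply/negP=> /orP [/andP [hne hzL]|/eqP hzx].
    by rewrite (hz z zX hzL) eqxx in hne.
  by rewrite -hzx zX in hx.
have stepM : forall (X : {set T}) (i : 'I_n) e, X \subset E :\: C i -> e \in C i ->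
    rk M (e |: X) = rk M X + 1.
  by move=> X i e sX eC; apply: cocirc_step hM (hcM i) sX eC.
have stepH : forall (X : {set T}) (i : 'I_n) e, X \subset E :\: C i -> e \in C i ->
    rk H (e |: X) = rk H X + 1.
  by move=> X i e sX eC; apply: cocirc_step hH (hcH i) _ eC; rewrite -hEq.
have FE : forall (X : {set T}) (i : 'I_n), X \subset E :\: C i -> X \subset E.
  by move=> X i h; apply: subset_trans h (subsetDl _ _).
have caseA : forall k (X : {set T}) (i : 'I_n), #|X| <= k -> X \subset E -> y i \in X ->
    (forall z, z \in X -> z \in L -> z = y i) -> rk M X = rk H X.
  elim=> [|k IH] X i hk sX hyi hz.
    by move: hk; rewrite leqn0 cards_eq0 => /eqP X0; rewrite X0 inE in hyi.
  have [j hj] := other i.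
  case: (boolP (x i \in X)) => hx.
    have hY : #|X :\ x i| <= k by move: hk; rewrite (cardsD1 (x i) X) hx; lia.
    have sY : X :\ x i \subset E by apply: subset_trans (subsetDl _ _) sX.
    have hyY : y i \in X :\ x i by rewrite !inE hyi eq_sym xnL.
    have hzY : forall z, z \in X :\ x i -> z \in L -> z = y i.
      by move=> z; rewrite !inE => /andP [_ zX]; apply: hz.
    have IHY := IH _ _ hY sY hyY hzY.
    have sF := inF _ _ sY hzY (ltac:(by rewrite !inE eqxx)).
    by rewrite -(setD1K hx) (stepM _ _ _ sF (xC i)) (stepH _ _ _ sF (xC i)) IHY.
  have sF := inF _ _ sX hz hx.
  have sYE : y j |: X \subset E by rewrite subUset sub1set yE sX.
  have := base _ _ _ sYE (setU11 _ _) (setU1r _ hyi) hj.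
  rewrite (stepM _ _ _ sF (yC _ _ hj)) (stepH _ _ _ sF (yC _ _ hj)); lia.
have n0 : 0 < n by lia.
pose i0 : 'I_n := Ordinal n0.
have [j0 hj0] := other i0.
have caseB : forall k (X : {set T}), #|X| <= k -> X \subset E ->
    (forall z, z \in X -> z \notin L) -> rk M X = rk H X.
  elim=> [|k IH] X hk sX hz.
    move: hk; rewrite leqn0 cards_eq0 => /eqP ->.
    have a := rk_card hM (sub0set E); have b := rk_card hH (sub0set (ground H)).
    move: a b; rewrite cards0; lia.
  have hz' : forall z, z \in X -> z \in L -> z = y i0.
    by move=> z zX zL; move: (hz z zX); rewrite zL.
  case: (boolP (x i0 \in X)) => hx.
    have hY : #|X :\ x i0| <= k by move: hk; rewrite (cardsD1 (x i0) X) hx; lia.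
    have sY : X :\ x i0 \subset E by apply: subset_trans (subsetDl _ _) sX.
    have hzY : forall z, z \in X :\ x i0 -> z \notin L.
      by move=> z; rewrite !inE => /andP [_ zX]; apply: hz.
    have hzY' : forall z, z \in X :\ x i0 -> z \in L -> z = y i0.
      by move=> z zY zL; move: (hzY z zY); rewrite zL.
    have IHY := IH _ hY sY hzY.
    have sF := inF _ _ sY hzY' (ltac:(by rewrite !inE eqxx)).
    by rewrite -(setD1K hx) (stepM _ _ _ sF (xC i0)) (stepH _ _ _ sF (xC i0)) IHY.
  have sF := inF _ _ sX hz' hx.
  have sYE : y j0 |: X \subset E by rewrite subUset sub1set yE sX.
  have hzA : forall z, z \in y j0 |: X -> z \in L -> z = y j0.
    move=> z; rewrite in_setU1 => /orP [/eqP -> //|zX] zL.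
    by move: (hz z zX); rewrite zL.
  have := caseA _ _ _ (leqnn _) sYE (setU11 _ _) hzA.
  rewrite (stepM _ _ _ sF (yC _ _ hj0)) (stepH _ _ _ sF (yC _ _ hj0)); lia.
split => // X sX.
case: (boolP [exists i, [exists j, [&& i != j, y i \in X & y j \in X]]]).
  by case/existsP=> i /existsP [j /and3P [hij hi hj]]; apply: base hi hj hij.
rewrite negb_exists => /forallP hno.
case: (boolP [exists i, y i \in X]).
  case/existsP=> i hi; apply: (caseA _ _ i (leqnn _) sX hi).
  move=> z zX /inL [j hzj]; subst z; case: (eqVneq j i) => [-> //|hji].
  have := hno j; rewrite negb_exists => /forallP /(_ i).
  by rewrite hji hi zX.
rewrite negb_exists => /forallP hno2.
apply: (caseB _ _ (leqnn _) sX) => z zX; apply/negP => /inL [i hi]; subst z.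
by have := hno2 i; rewrite zX.

Qed.
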